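(* Let $\mathcal{C}\subset\mathbb{R}^n$ be nonempty compact convex and let $f$ be continuously differentiable with $\nabla f$ $L$-Lipschitz on $\mathcal{C}$. Let $\{x^t\}_{t\ge0}$ be generated by the Boosted Frank–Wolfe algorithm described in the context with $m^t=\nabla f(x^t)$ for every $t$. Then for all $t\ge0$, $$f(x^{t+1})\le f(x^t)+\eta_t\langle\nabla f(x^t),s^t-x^t\rangle+\frac L2\eta_t^2\|s^t-x^t\|^2,$$ where $s^t=\mathrm{lmo}(\nabla f(x^t))$.
   Context: Euclidean norms. $\mathrm{lmo}(v)$ denotes a (fixed selection of a) point of $\arg\min_{s\in\mathcal{C}}\langle s,v\rangle$. $\mathrm{align}(d,\hat d)=\frac{\langle d,\hat d\rangle}{\|d\|\|\hat d\|}$ if $\hat d\ne0$, $-1$ if $\hat d=0$. Algorithm: inputs $K\ge1$, $\delta\in(0,1]$, step decays $\eta_t>0$, a vector $m^{\rm init}$; $x^0=\mathrm{lmo}(m^{\rm init})$. At iteration $t$ a vector $m^t$ is formed. Boosting: $\psi^0=0$, $\Lambda_t=0$, $k=0$; while $k\le K-1$: $r^k=-m^t-\psi^k$, $v^k=\mathrm{lmo}(-r^k)$; if $k=0$, $s^t=v^0$; if $\psi^k\ne0$, $u^k$ is whichever of $v^k-x^t$, $-\psi^k/\|\psi^k\|$ has the larger inner product with $r^k$, else $u^k=v^k-x^t$; if $u^k=0$ stop; $\lambda_k=\langle r^k,u^k\rangle/\|u^k\|^2$, $\phi^k=\psi^k+\lambda_ku^k$; if $\mathrm{align}(-m^t,\phi^k)-\mathrm{align}(-m^t,\psi^k)\ge\delta$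 then $\psi^{k+1}=\phi^k$, $\Lambda_t\leftarrow\Lambda_t+\lambda_k$ if $u^k=v^k-x^t$ and $\Lambda_t\leftarrow\Lambda_t(1-\lambda_k/\|\psi^k\|)$ otherwise, $k\leftarrow k+1$; else stop. With $\psi$ the last accepted candidate, $\tilde d^t=\psi/\Lambda_t$ if $\Lambda_t\ne0$, else $0$. $\gamma_t=\min\{\eta_t\|s^t-x^t\|/\|\tilde d^t\|,1\}$ if $\tilde d^t\ne0$, else $1$. If $\gamma_t<1$: $x^{t+1}=x^t+\gamma_t\tilde d^t$; otherwise $x^{t+1}=x^t+\eta_t(s^t-x^t)$. *)

(* Defs.v *)
From HB Require Import structures.
From mathcomp Require Import all_boot all_order all_algebra.
From mathcomp Require Import all_classical all_reals all_analysis.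
Set Implicit Arguments. Unset Strict Implicit. Unset Printing Implicit Defensive.
Import Order.TTheory GRing.Theory Num.Theory.
Import numFieldNormedType.Exports.
Local Open Scope classical_set_scope.
Local Open Scope ring_scope.

Section BFW.
Variables (R : realType) (n : nat).
Implicit Types (u v x m : 'rV[R]_n).

Definition dot u v : R := \sum_(i < n) u 0 i * v 0 i.
Definition enorm u : R := Num.sqrt (dot u u).

Definition align u v : R :=
  if v != 0 then dot u v / (enorm u * enorm v) else -1.

Definition convex_rV (C : set 'rV[R]_n) : Prop :=
  forall x y, C x -> C y -> forall a : R, 0 <= a <= 1 ->
    C (a *: x + (1 - a) *: y).

Definition is_lmo (C : set 'rV[R]_n) (lmo : 'rV[R]_n -> 'rV[R]_n) : Prop :=
  forall v, C (lmo v) /\ forall s, C s -> dot (lmo v) v <= dot s v.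

(* The boosting loop (while k <= K-1), run with at most [j] remaining
   iterations, current accepted candidate [psi] and current [Lam].
   Returns the last accepted candidate psi and Lambda_t. *)
Fixpoint boost_loop (lmo : 'rV[R]_n -> 'rV[R]_n) (delta : R) (x m : 'rV[R]_n)
  (j : nat) (psi : 'rV[R]_n) (Lam : R) : 'rV[R]_n * R :=
  match j with
  | 0 => (psi, Lam)
  | j'.+1 =>
    let r := - m - psi in
    let v := lmo (- r) in
    let ufw := v - x in
    let uaw := - ((enorm psi)^-1 *: psi) in
    (* fw = true iff u^k = v^k - x^t  (ties broken in favour of v^k - x^t) *)
    let fw := if psi != 0 then dot r uaw <= dot r ufw else true in
    let u := if fw then ufw else uaw in
    if u == 0 then (psi, Lam) else
    let lam := dot r u / (enorm u ^+ 2) in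
    let phi := psi + lam *: u in
    if delta <= align (- m) phi - align (- m) psi then
      boost_loop lmo delta x m j' phi
        (if fw then Lam + lam else Lam * (1 - lam / enorm psi))
    else (psi, Lam)
  end.

Definition bfw_step (lmo : 'rV[R]_n -> 'rV[R]_n) (K : nat) (delta eta : R)
  (x m : 'rV[R]_n) : 'rV[R]_n :=
  let s := lmo (- (- m - 0)) in                      (* s^t = v^0 *)
  let pL := boost_loop lmo delta x m K 0 0 in
  let psi := pL.1 in
  let Lam := pL.2 in
  let dt := if Lam != 0 then Lam^-1 *: psi else 0 in
  let gamma := if dt != 0 then Num.min (eta * enorm (s - x) / enorm dt) 1
               else 1 in
  if gamma < 1 then x + gamma *: dt else x + eta *: (s - x).

Fixpoint bfw_iter (lmo : 'rV[R]_n -> 'rV[R]_n) (K : nat) (delta : R)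
  (eta : nat -> R) (grad : 'rV[R]_n -> 'rV[R]_n) (minit : 'rV[R]_n)
  (t : nat) : 'rV[R]_n :=
  match t with
  | 0 => lmo minit
  | t'.+1 => let x := bfw_iter lmo K delta eta grad minit t' in
             bfw_step lmo K delta (eta t') x (grad x)
  end.

End BFW.

(* Main.v *)
Require Import Defs.
From HB Require Import structures.
From mathcomp Require Import all_boot all_order all_algebra.
From mathcomp Require Import all_classical all_reals all_analysis.
Import Order.TTheory GRing.Theory Num.Theory.
Import numFieldNormedType.Exports.
Local Open Scope classical_set_scope.
Local Open Scope ring_scope.

From mathcomp Require Import lra ring.
Set Implicit Arguments.
Section Dot.
Context {R : realType} {n : nat}.
Implicit Types (u v w : 'rV[R]_n).

Lemma dotC u v : dot u v = dot v u.
Proof. by rewrite /dot; apply: eq_bigr => i _; rewrite mulrC. Qed.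
Lemma dotDl u w v : dot (u + w) v = dot u v + dot w v.
Proof. by rewrite /dot -big_split; apply: eq_bigr => i _; rewrite mxE mulrDl. Qed.
Lemma dotZl a u v : dot (a *: u) v = a * dot u v.
Proof. by rewrite /dot mulr_sumr; apply: eq_bigr => i _; rewrite mxE mulrA. Qed.
Lemma dotNl u v : dot (- u) v = - dot u v.
Proof. by rewrite -scaleN1r dotZl mulN1r. Qed.
Lemma dotBl u w v : dot (u - w) v = dot u v - dot w v.
Proof. by rewrite dotDl dotNl. Qed.
Lemma dotDr u w v : dot v (u + w) = dot v u + dot v w.
Proof. by rewrite dotC dotDl !(dotC v). Qed.
Lemma dotZr a u v : dot v (a *: u) = a * dot v u.
Proof. by rewrite dotC dotZl dotC. Qed.
Lemma dotNr u v : dot v (- u) = - dot v u.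
Proof. by rewrite dotC dotNl dotC. Qed.
Lemma dotBr u w v : dot v (u - w) = dot v u - dot v w.
Proof. by rewrite dotDr dotNr. Qed.
Lemma dot0l v : dot 0 v = 0.
Proof. by rewrite -(scale0r (0 : 'rV[R]_n)) dotZl mul0r. Qed.
Lemma dot0r v : dot v 0 = 0.
Proof. by rewrite dotC dot0l. Qed.
Lemma dot_ge0 u : 0 <= dot u u.
Proof. by rewrite /dot; apply: sumr_ge0 => i _; rewrite -expr2 sqr_ge0. Qed.
Lemma dot_eq0 u : dot u u = 0 -> u = 0.
Proof.
move=> /eqP; rewrite /dot psumr_eq0 => [/allP H|i _]; last by rewrite -expr2 sqr_ge0.
apply/rowP => i; rewrite mxE.
have /H : i \in index_enum 'I_n by rewrite mem_index_enum.
by rewrite /= mulf_eq0 orbb => /eqP.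
Qed.
Lemma enorm_ge0 u : 0 <= enorm u.
Proof. exact: sqrtr_ge0. Qed.
Lemma enorm_sq u : enorm u ^+ 2 = dot u u.
Proof. by rewrite /enorm sqr_sqrtr // dot_ge0. Qed.
Lemma enorm_eq0 u : enorm u = 0 -> u = 0.
Proof. by move=> h; apply: dot_eq0; rewrite -enorm_sq h expr0n. Qed.
Lemma enorm0 : enorm (0 : 'rV[R]_n) = 0.
Proof. by rewrite /enorm dot0l sqrtr0. Qed.
Lemma enormZ a u : enorm (a *: u) = `|a| * enorm u.
Proof.
by rewrite /enorm dotZl dotZr mulrA -expr2 sqrtrM ?sqr_ge0 // sqrtr_sqr.
Qed.
Lemma enormN u : enorm (- u) = enorm u.
Proof. by rewrite -scaleN1r enormZ normrN normr1 mul1r. Qed.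
Lemma enorm_gt0 u : u != 0 -> 0 < enorm u.
Proof.
move=> h; rewrite lt_neqAle enorm_ge0 andbT; apply/eqP => e.
by move: h; rewrite (enorm_eq0 u (esym e)) eqxx.
Qed.
Lemma CS u v : dot u v <= enorm u * enorm v.
Proof.
have [->|u0] := eqVneq u 0; first by rewrite dot0l enorm0 mul0r.
have [->|v0] := eqVneq v 0; first by rewrite dot0r enorm0 mulr0.
set a := enorm u; set b := enorm v.
have a0 : 0 < a by exact: enorm_gt0.
have b0 : 0 < b by exact: enorm_gt0.
have := dot_ge0 (b *: u - a *: v).
rewrite !(dotBl, dotBr, dotZl, dotZr) -!enorm_sq -/a -/b (dotC v u).
move=> H.
have : a * b * dot u v <= a * b * (a * b) by nra.
by rewrite ler_pM2l ?mulr_gt0.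
Qed.
End Dot.

Section Descent.
Context {R : realType} {n : nat}.

Lemma line_is_derive (f : 'rV[R]_n -> R) (x d : 'rV[R]_n) (t : R) :
  differentiable f (x + t *: d) ->
  is_derive t 1 (fun s : R => f (x + s *: d)) ('d f (x + t *: d) d).
Proof.
move=> df.
have E : (fun h : R => h^-1 *: (((fun s : R => f (x + s *: d)) \o shift t) (h *: 1)
             - f (x + t *: d)))
       = (fun h : R => h^-1 *: ((f \o shift (x + t *: d)) (h *: d) - f (x + t *: d))).
  apply: funext => h /=; congr (_ *: (f _ - _)).
  by rewrite /shift /= [_%:A]mulr1 scalerDl addrCA.
apply: DeriveDef.
  by rewrite /derivable E; exact: diff_derivable.
by rewrite /derive E -deriveE.
Qed.
End Descent.
Section Q.
Context {R : realType}.
Lemma quad_is_derive (c k t : R) :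
  is_derive t 1 (fun s : R => c * s + k * (s * s)) (c + k * (t + t)).
Proof.
have -> : (fun s : R => c * s + k * (s * s)) = (c \*: id) + (k \*: (id * id)) :> (R -> R).
  by apply: funext => s.
apply: is_derive_eq.
by rewrite ![_%:A]mulr1.
Qed.
End Q.
Section Desc2.
Context {R : realType} {n : nat}.
Lemma descent (C : set 'rV[R]_n) (f : 'rV[R]_n -> R) (grad : 'rV[R]_n -> 'rV[R]_n)
  (L : R) (x y : 'rV[R]_n) :
  convex_rV C -> (forall z, differentiable f z) ->
  (forall z v, 'd f z v = dot (grad z) v) ->
  (forall x y, C x -> C y -> enorm (grad x - grad y) <= L * enorm (x - y)) ->
  C x -> C y -> f y <= f x + dot (grad x) (y - x) + L / 2 * enorm (y - x) ^+ 2.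
Proof.
move=> cvx df dfE lip Cx Cy.
set d := y - x; set c := dot (grad x) d; set k := L / 2 * enorm d ^+ 2.
pose h : R -> R := (fun s : R => f (x + s *: d)) - (fun s : R => c * s + k * (s * s)).
have hd (t : R) : is_derive t 1 h (dot (grad (x + t *: d)) d - (c + k * (t + t))).
  rewrite -dfE; apply: is_deriveB; [exact: line_is_derive | exact: quad_is_derive].
have hc : continuous h.
  move=> t; apply: differentiable_continuous; apply/derivable1_diffP.
  by case: (hd t).
have [t0 t0in E] := MVT_segment ler01 (fun t _ => hd t) (continuous_subspaceT hc).
move: t0in; rewrite in_itv /= => /andP[t0ge t0le].
set z := x + t0 *: d.
have Cz : C z.
  have -> : z = t0 *: y + (1 - t0) *: x.
    by apply/rowP => i; rewrite /z /d !mxE; lra.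
  by apply: cvx => //; rewrite t0ge t0le.
have zx : z - x = t0 *: d by rewrite /z addrC addKr.
have H1 : dot (grad z - grad x) d <= L * (t0 * enorm d) * enorm d.
  apply: le_trans; first exact: CS.
  apply: ler_wpM2r; first exact: enorm_ge0.
  by rewrite -(ger0_norm t0ge) -enormZ -zx; apply: lip.
have H2 : dot (grad z) d - (c + k * (t0 + t0)) <= 0.
  move: H1; rewrite dotBl /k /c; nra.
have Hy : x + 1 *: d = y by rewrite scale1r /d addrC subrK.
have Hx : x + 0 *: d = x by rewrite scale0r addr0.
have E' : f (x + 1 *: d) - (c * 1 + k * (1 * 1)) - (f (x + 0 *: d) - (c * 0 + k * (0 * 0)))
   = (dot (grad z) d - (c + k * (t0 + t0))) * (1 - 0) := E.
rewrite Hy Hx in E'.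
move: E' H2; lra.
Qed.
End Desc2.
Section Loop.
Context {R : realType} {n : nat}.
Variables (C : set 'rV[R]_n) (lmo : 'rV[R]_n -> 'rV[R]_n) (delta : R) (x g : 'rV[R]_n).
Hypothesis hlmo : is_lmo C lmo.
Hypothesis Cx : C x.
Hypothesis delta0 : 0 < delta.

Lemma align0 (u : 'rV[R]_n) : align u 0 = -1.
Proof. by rewrite /align eqxx. Qed.

Lemma alignZ (u v : 'rV[R]_n) c : 0 < c -> align u (c *: v) = align u v.
Proof.
move=> c0; have [->|v0] := eqVneq v 0; first by rewrite scaler0.
have cv0 : c *: v != 0 by rewrite scaler_eq0 negb_or v0 gt_eqF.
rewrite /align cv0 v0 dotZr enormZ gtr0_norm //.
have [u0|u0] := eqVneq (enorm u) 0; first by rewrite u0 !mul0r !invr0 !mulr0.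
have [e0|e0] := eqVneq (enorm v) 0; first by rewrite e0 !mulr0 !invr0 !mulr0.
field; by rewrite ?(mulf_neq0, u0, e0, gt_eqF c0).
Qed.

Lemma alignZN (u v : 'rV[R]_n) c : c < 0 -> align u (c *: v) = - align u v \/ v = 0.
Proof.
move=> c0; have [->|v0] := eqVneq v 0; first by right.
left.
have cv0 : c *: v != 0 by rewrite scaler_eq0 negb_or v0 lt_eqF.
rewrite /align cv0 v0 dotZr enormZ ltr0_norm //.
have [u0|u0] := eqVneq (enorm u) 0; first by rewrite u0 !mul0r !invr0 !mulr0 oppr0.
have [e0|e0] := eqVneq (enorm v) 0; first by rewrite e0 !mulr0 !invr0 !mulr0 oppr0.
field; by rewrite ?(mulf_neq0, u0, e0, lt_eqF c0, oppr_eq0).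
Qed.

Lemma align_ge0_dot (u v : 'rV[R]_n) : 0 <= align u v -> 0 <= dot u v.
Proof.
rewrite /align; have [v0|v0] /= := eqVneq v 0.
  by move=> h; have := le_lt_trans h (ltrN10 R); rewrite ltxx.
have [u0|u0] := eqVneq u 0; first by rewrite u0 dot0l.
have d0 : 0 < (enorm u * enorm v)^-1 by rewrite invr_gt0 mulr_gt0 // enorm_gt0.
by rewrite pmulr_lge0.
Qed.

Lemma align_ge0 (u v : 'rV[R]_n) : v != 0 -> 0 <= dot u v -> 0 <= align u v.
Proof.
by move=> v0 h; rewrite /align v0 divr_ge0 // mulr_ge0 // enorm_ge0.
Qed.

Lemma lmo_dot (r : 'rV[R]_n) : 0 <= dot r (lmo (- r) - x).
Proof.
have [_ /(_ x Cx) h] := hlmo (- r).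
move: h; rewrite !dotNr dotBr (dotC r) (dotC r); lra.
Qed.
Hypothesis cvx : convex_rV C.

Definition Inv (psi : 'rV[R]_n) (Lam : R) : Prop :=
  (psi = 0 /\ Lam = 0) \/
  [/\ 0 < Lam, psi != 0, (exists2 p, C p & psi = Lam *: (p - x)),
      align (- g) (lmo g - x) <= align (- g) psi & 0 <= align (- g) psi].

Lemma loop_inv j psi Lam : Inv psi Lam ->
  Inv (boost_loop lmo delta x g j psi Lam).1 (boost_loop lmo delta x g j psi Lam).2.
Proof.
elim: j psi Lam => [//|j IH] psi Lam I0 /=.
have I1 := I0.
case: I1 => [[E1 E2]|[Lam0 psi0 [p Cp Ep] a1 a2]].
  rewrite E1 E2 eqxx /= subr0 opprK.
  have Hr := lmo_dot (- g).
  rewrite opprK in Hr.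
  case: ifP => [_|/negbT u0]; first by left.
  set lam := dot (- g) (lmo g - x) / _.
  rewrite align0 add0r.
  case: ifP => [acc|_]; last by left.
  apply: IH.
  have lam0 : 0 <= lam by rewrite /lam divr_ge0 // exprn_ge0 // enorm_ge0.
  have lamn0 : lam != 0.
    apply/eqP => l0; move: acc; by rewrite l0 scale0r align0 subrr leNgt delta0.
  have lamp : 0 < lam by rewrite lt_neqAle eq_sym lamn0.
  right; split.
  - by rewrite add0r.
  - by rewrite scaler_eq0 negb_or lamn0.
  - by exists (lmo g); [case: (hlmo g) | rewrite add0r].
  - by rewrite alignZ.
  - by rewrite alignZ // align_ge0.
rewrite psi0 /=.
set r := - g - psi; set v := lmo (- r).
have Hr : 0 <= dot r (v - x) := lmo_dot r.
set e := enorm psi.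
case Hfw: (dot r (- (e^-1 *: psi)) <= dot r (v - x)) => /=.
  case: ifP => [_|/negbT u0]; first exact: I0.
  set lam := dot r (v - x) / _.
  case: ifP => [acc|_]; last exact: I0.
  apply: IH.
  have lam0 : 0 <= lam by rewrite /lam divr_ge0 // exprn_ge0 // enorm_ge0.
  have gt : align (- g) psi < align (- g) (psi + lam *: (v - x)).
    by rewrite -subr_gt0; exact: lt_le_trans delta0 acc.
  have phi0 : psi + lam *: (v - x) != 0.
    by apply/eqP => E; rewrite E align0 in gt; lra.
  have Ll0 : 0 < Lam + lam by lra.
  have ha : 0 <= Lam / (Lam + lam) <= 1.
    apply/andP; split; first by rewrite divr_ge0 // ltW.
    by rewrite ler_pdivrMr // mul1r lerDl.
  right; split => //.
  - exists (Lam / (Lam + lam) *: p + (1 - Lam / (Lam + lam)) *: v).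
      apply: cvx => //; by case: (hlmo (- r)).
    rewrite Ep; apply/rowP => i; rewrite !mxE; field.
    by rewrite gt_eqF.
  - lra.
  - lra.
case: ifP => [_|/negbT u0]; first exact: I0.
set lam := dot r _ / _.
case: ifP => [acc|_]; last exact: I0.
apply: IH.
have Ephi : psi + lam *: (- (e^-1 *: psi)) = (1 - lam / e) *: psi.
  by rewrite scalerN scalerA scalerBl scale1r.
rewrite Ephi in acc *.
set c := 1 - lam / e.
have gt : align (- g) psi < align (- g) (c *: psi).
  by rewrite -subr_gt0; exact: lt_le_trans delta0 acc.
have c0 : 0 < c.
  case: (ltgtP c 0) => [cn|//|cz].
  - case: (alignZN (- g) psi c cn) => [E|E]; last by move: psi0; rewrite E eqxx.
    rewrite E in gt; lra.
  - by rewrite cz scale0r align0 in gt; lra.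
right; split.
- exact: mulr_gt0.
- by rewrite scaler_eq0 negb_or gt_eqF.
- by exists p => //; rewrite Ep scalerA mulrC.
- by rewrite alignZ.
- by rewrite alignZ.
Qed.
End Loop.

Section Main.
Context {R : realType} {n : nat}.

Lemma seg_in (C : set 'rV[R]_n) x p a : convex_rV C -> C x -> C p -> 0 <= a <= 1 ->
  C (x + a *: (p - x)).
Proof.
move=> cvx Cx Cp ha.
have -> : x + a *: (p - x) = a *: p + (1 - a) *: x.
  by apply/rowP => i; rewrite !mxE; lra.
exact: cvx.
Qed.

Lemma ratio_le (a b c d : R) : 0 < c -> 0 < d -> - b / c <= - a / d -> a * c <= b * d.
Proof.
move=> c0 d0; rewrite ler_pdivlMr // mulrAC ler_pdivrMr // => h; nra.
Qed.

Variables (C : set 'rV[R]_n) (f : 'rV[R]_n -> R) (grad : 'rV[R]_n -> 'rV[R]_n) (L : R)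
  (lmo : 'rV[R]_n -> 'rV[R]_n) (K : nat) (delta : R).
Hypotheses (cvx : convex_rV C) (df : forall x, differentiable f x)
  (dfE : forall x v, 'd f x v = dot (grad x) v)
  (lip : forall x y, C x -> C y -> enorm (grad x - grad y) <= L * enorm (x - y))
  (hlmo : is_lmo C lmo) (delta0 : 0 < delta).

Lemma fw_bound x eta0 : C x -> 0 < eta0 <= 1 ->
  let s := lmo (grad x) in
  C (x + eta0 *: (s - x)) /\
  f (x + eta0 *: (s - x)) <= f x + eta0 * dot (grad x) (s - x)
                  + L / 2 * eta0 ^+ 2 * enorm (s - x) ^+ 2.
Proof.
move=> Cx /andP[e0 e1] s.
have Cs : C s by case: (hlmo (grad x)).
have Cy : C (x + eta0 *: (s - x)) by apply: seg_in => //; rewrite ltW ?e0.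
split => //.
have := @descent _ _ C f grad L x _ cvx df dfE lip Cx Cy.
have -> : x + eta0 *: (s - x) - x = eta0 *: (s - x) by rewrite addrC addKr.
by rewrite dotZr enormZ gtr0_norm // exprMn mulrA.
Qed.

Lemma step_bound x eta0 : C x -> 0 < eta0 <= 1 ->
  let s := lmo (grad x) in
  let y := bfw_step lmo K delta eta0 x (grad x) in
  C y /\
  f y <= f x + eta0 * dot (grad x) (s - x) + L / 2 * eta0 ^+ 2 * enorm (s - x) ^+ 2.
Proof.
move=> Cx he s y.
have [FC FB] := @fw_bound x eta0 Cx he.
have [e0 e1] := andP he.
rewrite /y /bfw_step subr0 opprK -/s.
have I := loop_inv (C:=C) (lmo:=lmo) delta (x:=x) (g:=grad x) hlmo Cx delta0 cvx K (or_introl (conj erefl erefl)).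
move: I; set pL := boost_loop _ _ _ _ _ _ _ => I.
case: I => [[-> ->]|[Lam0 psi0 [p Cp Ep] a1 a2]].
  by rewrite eqxx /= eqxx /= ltxx.
rewrite gt_eqF //=.
have dE : pL.2^-1 *: pL.1 = p - x.
  by rewrite Ep scalerA mulVf ?gt_eqF // scale1r.
rewrite dE.
have q0 : p - x != 0 by move: psi0; rewrite Ep scaler_eq0 negb_or => /andP[].
rewrite q0.
set a := eta0 * enorm (s - x) / enorm (p - x).
have a0 : 0 <= a by rewrite /a !mulr_ge0 ?invr_ge0 ?enorm_ge0 // ltW.
case: ifP => [lt1|_]; last by [].
have ga : Num.min a 1 = a.
  by move: lt1; rewrite /Num.min; case: ifP => // _; rewrite ltxx.
rewrite ga in lt1 *.
have Cy : C (x + a *: (p - x)) by apply: seg_in => //; rewrite a0 ltW.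
split => //.
have := @descent _ _ C f grad L x _ cvx df dfE lip Cx Cy.
have -> : x + a *: (p - x) - x = a *: (p - x) by rewrite addrC addKr.
rewrite dotZr enormZ ger0_norm //.
have qp : 0 < enorm (p - x) by exact: enorm_gt0.
have -> : a * enorm (p - x) = eta0 * enorm (s - x).
  by rewrite /a mulrAC -mulrA divff ?gt_eqF // mulr1.
suff : a * dot (grad x) (p - x) <= eta0 * dot (grad x) (s - x).
  rewrite exprMn mulrA; lra.
have [w0|w0] := eqVneq (s - x) 0.
  by rewrite /a w0 enorm0 !mulr0 !mul0r dot0r mulr0.
have [g0|g0] := eqVneq (grad x) 0.
  by rewrite g0 !dot0l !mulr0.
have wp : 0 < enorm (s - x) by exact: enorm_gt0.
have gp : 0 < enorm (grad x) by exact: enorm_gt0.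
move: a1; rewrite Ep alignZ // /align w0 q0 !dotNl enormN => a1.
have := @ratio_le _ _ _ _ (mulr_gt0 gp wp) (mulr_gt0 gp qp) a1.
rewrite /a => h.
have h' : dot (grad x) (p - x) * enorm (s - x) <= dot (grad x) (s - x) * enorm (p - x).
  move: h; rewrite (mulrC (enorm (grad x)) (enorm (s - x))).
  by rewrite (mulrC (enorm (grad x)) (enorm (p - x))) !mulrA ler_pM2r.
have H : enorm (s - x) / enorm (p - x) * dot (grad x) (p - x) <= dot (grad x) (s - x).
  by rewrite mulrAC ler_pdivrMr // mulrC.
by move: H; rewrite -!mulrA ler_pM2l.
Qed.
End Main.


Theorem lemma2 (R : realType) (n : nat) (C : set 'rV[R]_n)
  (f : 'rV[R]_n -> R) (grad : 'rV[R]_n -> 'rV[R]_n) (L : R)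
  (lmo : 'rV[R]_n -> 'rV[R]_n) (K : nat) (delta : R) (eta : nat -> R)
  (minit : 'rV[R]_n) :
  C !=set0 -> compact C -> convex_rV C ->
  (forall x, differentiable f x) ->
  (forall x v, 'd f x v = dot (grad x) v) ->
  continuous grad ->
  (forall x y, C x -> C y -> enorm (grad x - grad y) <= L * enorm (x - y)) ->
  is_lmo C lmo ->
  (1 <= K)%N -> 0 < delta <= 1 ->
  (forall t, 0 < eta t <= 1) ->
  forall t : nat,
    let x := bfw_iter lmo K delta eta grad minit in
    let s := lmo (grad (x t)) in
    f (x t.+1) <= f (x t) + eta t * dot (grad (x t)) (s - x t)
                  + L / 2 * eta t ^+ 2 * enorm (s - x t) ^+ 2.
Proof.
move=> _ _ cvx df dfE _ lip hlmo _ /andP[d0 _] he t; cbv zeta.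
set x := bfw_iter lmo K delta eta grad minit.
have Cxt : forall t, C (x t).
  elim=> [|k IH]; first by case: (hlmo minit).
  by have [] := @step_bound _ _ C f grad L lmo K delta cvx df dfE lip hlmo d0 _ _ IH (he k).
by have [] := @step_bound _ _ C f grad L lmo K delta cvx df dfE lip hlmo d0 _ _ (Cxt t) (he t).
Qed.
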